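(* Let $k \geq 2$, $n \geq 2$ and $\lambda \geq 1$ be integers. Suppose $A$ is an $\mathrm{OA}_{\lambda}(k,n)$ on a symbol set containing the symbol $1$, and suppose that the row $(1,1,\dots,1)$ is repeated $m$ times in $A$ (i.e., $m$ of the rows of $A$ equal $(1,1,\dots,1)$), where \[m = \frac{\lambda n^2}{k(n-1)+1}.\] Then every other row of $A$ (each of the remaining $\lambda n^2 - m$ rows) contains exactly \[\overline{a} = \frac{k(\lambda n - m)}{\lambda n^2-m}\] occurrences of the symbol $1$.
   Context: An orthogonal array $\mathrm{OA}_{\lambda}(k,n)$ (of strength two) is a $\lambda n^2$ by $k$ array $A$ with entries from a set $X$ of cardinality $n$ such that, within any two columns of $A$, every ordered pair of symbols from $X$ occurs in exactly $\lambda$ rows of $A$. *)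

(* Defs.v *)
From mathcomp Require Import all_boot all_order all_algebra.
Set Implicit Arguments. Unset Strict Implicit. Unset Printing Implicit Defensive.

Definition is_OA (X : finType) (lambda k n : nat)
  (A : 'I_(lambda * n ^ 2) -> 'I_k -> X) : Prop :=
  #|X| = n /\
  forall (c1 c2 : 'I_k), c1 != c2 -> forall x y : X,
    #|[set r | (A r c1 == x) && (A r c2 == y)]| = lambda.
Arguments is_OA : clear implicits.

Definition const_rows (X : finType) (N k : nat) (A : 'I_N -> 'I_k -> X) (s : X)
  : {set 'I_N} := [set r | [forall c, A r c == s]].

Definition occ (X : finType) (N k : nat) (A : 'I_N -> 'I_k -> X) (s : X)
  (r : 'I_N) : nat := #|[set c | A r c == s]|.

(* Main.v *)
Require Import Defs.
From mathcomp Require Import all_boot all_order all_algebra.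
From mathcomp Require Import ring.
Import GRing.Theory Num.Theory.
Local Open Scope ring_scope.

Lemma card_setP (T : finType) (P : pred T) :
  #|[set x | P x]| = (\sum_x (P x : nat))%N.
Proof.
rewrite -sum1_card big_mkcond /=; apply: eq_bigr => x _; rewrite inE.
by case: (P x).
Qed.

Lemma col_count (X : finType) (one : X) (k n lambda : nat)
  (A : 'I_(lambda * n ^ 2) -> 'I_k -> X) :
  (2 <= k)%N -> is_OA X lambda k n A ->
  forall c, (\sum_r (A r c == one : nat))%N = (n * lambda)%N.
Proof.
move=> k2 [cX H] c.
have [c' neq] : exists c' : 'I_k, c' != c.
  case: (boolP (val c == 0%N)) => h.
  - by exists (Ordinal k2); apply/eqP => /(congr1 val) /=; rewrite (eqP h).
  - have k0 : (0 < k)%N by apply: leq_trans k2.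
    by exists (Ordinal k0); apply: contra h => /eqP <-.
rewrite (eq_bigr (fun r => \sum_y ((A r c == one) && (A r c' == y) : nat))%N).
  rewrite exchange_big /= (eq_bigr (fun _ => lambda)).
    by rewrite sum_nat_const cardT -cardE cX.
  move=> y _; have := H c c' _ one y; rewrite card_setP; apply.
  by rewrite eq_sym.
move=> r _; rewrite (bigD1 (A r c')) //= eqxx andbT big1 ?addn0 // => y ney.
by rewrite [A r c' == y]eq_sym (negbTE ney) andbF.
Qed.

Lemma row_sum (X : finType) (one : X) (k n lambda : nat)
  (A : 'I_(lambda * n ^ 2) -> 'I_k -> X) :
  (2 <= k)%N -> is_OA X lambda k n A ->
  (\sum_r occ A one r)%N = (k * (n * lambda))%N.
Proof.
move=> k2 H; rewrite /occ.
under eq_bigr do rewrite card_setP.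
rewrite exchange_big /= (eq_bigr (fun _ => (n * lambda)%N)).
  by rewrite sum_nat_const card_ord.
by move=> c _; apply: col_count.
Qed.

Lemma sq_sum (X : finType) (one : X) (k n lambda : nat)
  (A : 'I_(lambda * n ^ 2) -> 'I_k -> X) :
  (2 <= k)%N -> is_OA X lambda k n A ->
  (\sum_r occ A one r * occ A one r)%N = (k * (n * lambda + (k - 1) * lambda))%N.
Proof.
move=> k2 H; rewrite /occ.
under eq_bigr do rewrite card_setP big_distrl /=.
under eq_bigr do under eq_bigr do rewrite big_distrr /=.
rewrite exchange_big /=.
rewrite (eq_bigr (fun _ => (n * lambda + (k - 1) * lambda)%N)).
  by rewrite sum_nat_const card_ord.
move=> c _; rewrite exchange_big /= (bigD1 c) //=; congr (_ + _)%N.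
  rewrite -(col_count _ one _ _ _ _ k2 H c); apply: eq_bigr => r _.
  by case: (A r c == one).
rewrite (eq_bigr (fun _ => lambda)).
  by rewrite sum_nat_const cardC1 card_ord subn1.
move=> c' nc; case: H => _ H; have hh := H c c' _ one one; rewrite card_setP in hh.
apply: etrans (hh _); last by rewrite eq_sym.
apply: eq_bigr => r _.
by case: (A r c == one); case: (A r c' == one).
Qed.

Lemma alg (l n k m : rat) : n != 0 -> m * (k * (n - 1) + 1) = l * (n * n) ->
  (l * (n * n) - m) * (k * (n * l + (k - 1) * l) - m * k ^+ 2) =
  (k * (n * l) - m * k) ^+ 2.
Proof.
move=> n0 h.
have hl : l = m * (k * (n - 1) + 1) / (n * n) by rewrite h; field.
rewrite hl; field.
exact: n0.
Qed.

Theorem corollary4 (X : finType) (one : X) (k n lambda m : nat)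
  (A : 'I_(lambda * n ^ 2) -> 'I_k -> X) :
  (2 <= k)%N -> (2 <= n)%N -> (1 <= lambda)%N ->
  is_OA X lambda k n A ->
  #|const_rows A one| = m ->
  (m%:R : rat) = (lambda * n ^ 2)%:R / (k * (n - 1) + 1)%:R ->
  forall r, r \notin const_rows A one ->
    ((occ A one r)%:R : rat) =
      (k%:R * ((lambda * n)%:R - m%:R)) / ((lambda * n ^ 2)%:R - m%:R).
Proof.
move=> k2 n2 l1 H Cm hm r rC.
set C := const_rows A one.
have occC : forall r, r \in C -> occ A one r = k.
  move=> r0; rewrite inE => /forallP h; rewrite /occ.
  suff -> : [set c | A r0 c == one] = setT by rewrite cardsT card_ord.
  by apply/setP => c; rewrite !inE h.
have E1 := row_sum _ one _ _ _ _ k2 H; have E2 := sq_sum _ one _ _ _ _ k2 H.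
rewrite (bigID (mem C)) /= in E1; rewrite (bigID (mem C)) /= in E2.
rewrite (eq_bigr (fun _ => k)) in E1; last by move=> i; apply: occC.
rewrite (eq_bigr (fun _ => (k * k)%N)) in E2; last by move=> i /occC ->.
rewrite !sum_nat_const in E1 E2.
have hC : #|[pred i | i \in C]| = m by rewrite -Cm; apply: eq_card.
rewrite hC in E1 E2.
set a := fun r => ((occ A one r)%:R : rat).
set S1 := \sum_(i | i \notin C) a i.
set S2 := \sum_(i | i \notin C) a i ^+ 2.
set M := \sum_(i | i \notin C) (1 : rat).
have hS1 : S1 = (k * (n * lambda))%:R - m%:R * k%:R.
  rewrite -E1 natrD natrM /S1 /a -natr_sum; ring.
have hS2 : S2 = (k * (n * lambda + (k - 1) * lambda))%:R - m%:R * k%:R ^+ 2.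
  have hE : \sum_(i | i \notin C) ((occ A one i * occ A one i)%N%:R : rat) =
    \sum_(i | i \notin C) ((occ A one i)%:R : rat) ^+ 2.
    by apply: eq_bigr => i _; rewrite natrM expr2.
  rewrite -E2 natrD !natrM /S2 /a natr_sum hE; ring.
have hM : M = (lambda * n ^ 2)%:R - m%:R.
  have hN : (lambda * n ^ 2)%N = (m + #|[pred x | x \notin C]|)%N.
    transitivity #|'I_(lambda * n ^ 2)|; first by rewrite card_ord.
    rewrite -(cardC (mem C)) -Cm; congr (_ + _)%N; apply: eq_card => x //.
  rewrite /M sumr_const [in RHS]hN natrD; ring.
set D := (k * (n - 1) + 1)%N.
have D0 : (D%:R : rat) != 0 by rewrite pnatr_eq0 /D addn1.
have N0 : ((lambda * n ^ 2)%:R : rat) != 0.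
  by rewrite pnatr_eq0 -lt0n muln_gt0 expn_gt0 (leq_trans _ n2) ?l1.
have hmD : (m%:R : rat) * D%:R = (lambda * n ^ 2)%:R.
  by rewrite hm mulfVK.
have M0 : M != 0.
  have hk : ((k * (n - 1))%:R : rat) != 0.
    by rewrite pnatr_eq0 -lt0n muln_gt0 subn_gt0 (leq_trans _ k2) ?n2.
  apply/eqP => M0.
  have : M * D%:R = (lambda * n ^ 2)%:R * (k * (n - 1))%:R.
    rewrite hM mulrBl hmD /D natrD mulrDr mulr1; ring.
  by rewrite M0 mul0r => /esym /eqP; rewrite mulf_eq0 (negbTE N0) (negbTE hk).
set mu := S1 / M.
have hsq : \sum_(i | i \notin C) (a i - mu) ^+ 2 = 0.
  rewrite (eq_bigr (fun i => a i ^+ 2 + ((- (2 * mu)) * a i + mu ^+ 2 * 1)));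
    last by move=> i _; ring.
  rewrite big_split big_split /= -!mulr_sumr -/S1 -/S2 -/M /mu.
  have key : M * S2 = S1 ^+ 2.
    rewrite hM hS2 hS1 !natrM natrD !natrM natrB ?(leq_trans _ k2) //.
    apply: alg.
      by rewrite pnatr_eq0 -lt0n (leq_trans _ n2).
    move: hmD; rewrite /D natrD natrM natrB ?(leq_trans _ n2) // => ->.
    by rewrite !natrM.
  rewrite -[S2](mulKf M0) key; field; exact: M0.
have := psumr_eq0P (fun i _ => sqr_ge0 (a i - mu)) hsq (i:=r) rC.
move/eqP; rewrite sqrf_eq0 subr_eq0 => /eqP; rewrite /a => ->.
rewrite /mu hM hS1; congr (_ / _); rewrite !natrM; ring.
Qed.
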